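(* Let $M\ge 3$ be an integer, let $c>0$, $f_c>0$, $d>0$, $R_D>0$ and $\theta_D\in(-\pi/2,\pi/2)$. Take all frequency offsets zero, i.e. $\Delta f_m=0$ for all $m$, so that $\xi_m=-\frac{d^2 f_c}{2R_D^2}(m-1)^2$ for $m=1,\dots,M$, and define $$X=\frac{4\pi^2}{c^2}\sum_{m=1}^M\sum_{n=1}^M(\xi_m-\xi_n)^2,\qquad Y=\frac{4\pi^2 d f_c\cos\theta_D}{c^2}\sum_{m=1}^M\sum_{n=1}^M (\xi_m-\xi_n)(m-n),\qquad Z=\frac{4\pi^2 f_c^2 d^2\cos^2\theta_D}{c^2}\sum_{m=1}^M\sum_{n=1}^M (m-n)^2 .$$ Let $E=\{(R,\theta)\in\mathbb{R}^2: X(R-R_D)^2+2Y(R-R_D)(\theta-\theta_D)+Z(\theta-\theta_D)^2=M^2\}$. Then $XZ>Y^2$, $E$ is an ellipse centred at $(R_D,\theta_D)$, and the area $S$ it encloses, the range extent $\Delta_R=\max_E R-\min_E R$ and the angular extent $\Delta_\theta=\max_E\theta-\min_E\theta$ are $$S=\frac{3\sqrt{15}\,c^2R_D^2}{\pi f_c^2 d^3\cos\theta_D\,(M^2-1)\sqrt{M^2-4}},\qquad \Delta_R=\frac{6\sqrt{10}\,cR_D^2}{\pi f_c d^2\sqrt{(M^2-1)(M^2-4)}},$$ $$\Delta_\theta=\frac{c\sqrt{6(16M^2-30M+11)}}{\pi f_c d\cos\theta_D\sqrt{(M^2-1)(M^2-4)}} .$$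
   Context: Physical setting: a conventional phased uniform linear array ($M$ antennas, spacing $d$, carrier $f_c$, no frequency offsets) focusing on a target at range $R_D$, angle $\theta_D$; $E$ models the half-power boundary of the beampattern in the (range, angle) plane, with $S$ its area and $\Delta_R$, $\Delta_\theta$ the main-lobe beamwidths in range and angle. *)

(* Defs.v *)
From HB Require Import structures.
From mathcomp Require Import all_boot all_order all_algebra.
From mathcomp Require Import all_classical all_reals all_analysis.
Set Implicit Arguments. Unset Strict Implicit. Unset Printing Implicit Defensive.
Import Order.TTheory GRing.Theory Num.Theory.
Local Open Scope classical_set_scope.
Local Open Scope ring_scope.

(* Zero frequency offsets: xi_m for m = i+1, i : 'I_M *)
Definition xi {R : realType} (d fc RD : R) (i : nat) : R :=
  - (d ^+ 2 * fc / (2 * RD ^+ 2)) * (i%:R) ^+ 2.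

Definition beamX {R : realType} (M : nat) (c d fc RD : R) : R :=
  4 * pi ^+ 2 / c ^+ 2 *
  \sum_(m < M) \sum_(n < M) (xi d fc RD m - xi d fc RD n) ^+ 2.

Definition beamY {R : realType} (M : nat) (c d fc RD thD : R) : R :=
  4 * pi ^+ 2 * d * fc * cos thD / c ^+ 2 *
  \sum_(m < M) \sum_(n < M)
     (xi d fc RD m - xi d fc RD n) * ((m%:R : R) - n%:R).

Definition beamZ {R : realType} (M : nat) (c d fc thD : R) : R :=
  4 * pi ^+ 2 * fc ^+ 2 * d ^+ 2 * cos thD ^+ 2 / c ^+ 2 *
  \sum_(m < M) \sum_(n < M) ((m%:R : R) - n%:R) ^+ 2.

Definition quadE {R : realType} (X Y Z RD thD : R) (p : R * R) : R :=
  X * (p.1 - RD) ^+ 2 + 2 * Y * (p.1 - RD) * (p.2 - thD) + Z * (p.2 - thD) ^+ 2.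

Definition is_ellipse_centred {R : realType} (E : set (R * R)) (x0 y0 : R) : Prop :=
  exists A B C : R, 0 < A /\ B ^+ 2 < A * C /\
    E = [set p | A * (p.1 - x0) ^+ 2 + 2 * B * (p.1 - x0) * (p.2 - y0)
                 + C * (p.2 - y0) ^+ 2 = 1].

Definition enclosed {R : realType} (X Y Z RD thD k : R) : set (R * R) :=
  [set p | quadE X Y Z RD thD p <= k].

Definition is_max {R : realType} (A : set R) (x : R) : Prop :=
  A x /\ forall y, A y -> y <= x.
Definition is_min {R : realType} (A : set R) (x : R) : Prop :=
  A x /\ forall y, A y -> x <= y.

(* Main.v *)
Require Import Defs.
From HB Require Import structures.
From mathcomp Require Import all_boot all_order all_algebra.
From mathcomp Require Import all_classical all_reals all_analysis.
From mathcomp Require Import ring lra.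
Import Order.TTheory GRing.Theory Num.Theory.
Import numFieldNormedType.Exports.
Local Open Scope classical_set_scope.
Local Open Scope ring_scope.


Section Alg.
Variable R : realType.

Lemma dsum (g h : nat -> R) M :
  \sum_(m < M) \sum_(n < M) (g m - g n) * (h m - h n) =
  2 * M%:R * \sum_(i < M) g i * h i - 2 * (\sum_(i < M) g i) * (\sum_(i < M) h i).
Proof.
rewrite (eq_bigr (fun m : 'I_M => M%:R * (g m * h m) + \sum_(i < M) g i * h i
   - g m * \sum_(i < M) h i - h m * \sum_(i < M) g i)); last first.
  move=> m _.
  rewrite (eq_bigr (fun n : 'I_M => (g m * h m + g n * h n) - g m * h n - h m * g n)); last first.
    by move=> n _; ring.
  by rewrite !sumrB big_split /= -!mulr_sumr sumr_const card_ord mulr_natl mulrnAr.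
rewrite !sumrB big_split /= -!mulr_sumr -!mulr_suml sumr_const card_ord.
rewrite -mulr_natl; ring.
Qed.

Definition ps (k M : nat) : R := \sum_(i < M) (i%:R) ^+ k.

Lemma ps1 M : ps 1 M = M%:R * (M%:R - 1) / 2.
Proof.
rewrite /ps; elim: M => [|M IH]; first by rewrite big_ord0 mul0r mul0r.
rewrite big_ord_recr /= IH -natr1; by field.
Qed.
Lemma ps2 M : ps 2 M = M%:R * (M%:R - 1) * (2 * M%:R - 1) / 6.
Proof.
rewrite /ps; elim: M => [|M IH]; first by rewrite big_ord0 mul0r mul0r mul0r.
rewrite big_ord_recr /= IH -natr1; by field.
Qed.
Lemma ps3 M : ps 3 M = (M%:R * (M%:R - 1)) ^+ 2 / 4.
Proof.
rewrite /ps; elim: M => [|M IH]; first by rewrite big_ord0 mul0r expr0n mul0r.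
rewrite big_ord_recr /= IH -natr1; by field.
Qed.
Lemma ps4 M : ps 4 M = M%:R * (M%:R - 1) * (2 * M%:R - 1) * (3 * M%:R ^+ 2 - 3 * M%:R - 1) / 30.
Proof.
rewrite /ps; elim: M => [|M IH]; first by rewrite big_ord0 !mul0r.
rewrite big_ord_recr /= IH -natr1; by field.
Qed.

Lemma sumXc (M : nat) (d fc RD : R) :
  \sum_(m < M) \sum_(n < M) (xi d fc RD m - xi d fc RD n) ^+ 2 =
  (d ^+ 2 * fc / (2 * RD ^+ 2)) ^+ 2 *
  (M%:R ^+ 2 * (M%:R - 1) * (2 * M%:R - 1) * (8 * M%:R ^+ 2 - 3 * M%:R - 11) / 90).
Proof.
set a := d ^+ 2 * fc / (2 * RD ^+ 2).
have e4 : \sum_(i < M) xi d fc RD i * xi d fc RD i = a ^+ 2 * ps 4 M.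
  by rewrite /ps mulr_sumr; apply: eq_bigr => i _; rewrite /xi -/a; ring.
have e2 : \sum_(i < M) xi d fc RD i = - a * ps 2 M.
  by rewrite /ps mulr_sumr; apply: eq_bigr => i _; rewrite /xi -/a.
under eq_bigr do under eq_bigr do rewrite expr2.
rewrite dsum e4 e2 ps4 ps2.
by field.
Qed.

Lemma sumYc (M : nat) (d fc RD : R) :
  \sum_(m < M) \sum_(n < M) (xi d fc RD m - xi d fc RD n) * ((m%:R : R) - n%:R) =
  - (d ^+ 2 * fc / (2 * RD ^+ 2)) *
  (M%:R ^+ 2 * (M%:R - 1) ^+ 2 * (M%:R + 1) / 6).
Proof.
set a := d ^+ 2 * fc / (2 * RD ^+ 2).
have e3 : \sum_(i < M) xi d fc RD i * i%:R = - a * ps 3 M.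
  by rewrite /ps mulr_sumr; apply: eq_bigr => i _; rewrite /xi -/a; ring.
have e2 : \sum_(i < M) xi d fc RD i = - a * ps 2 M.
  by rewrite /ps mulr_sumr; apply: eq_bigr => i _; rewrite /xi -/a.
have e1 : \sum_(i < M) (i%:R : R) = ps 1 M.
  by rewrite /ps; apply: eq_bigr => i _; rewrite expr1.
rewrite (dsum (xi d fc RD) (fun i => i%:R)) e3 e2 e1 ps3 ps2 ps1.
by field.
Qed.

Lemma sumZc (M : nat) :
  \sum_(m < M) \sum_(n < M) ((m%:R : R) - n%:R) ^+ 2 =
  M%:R ^+ 2 * (M%:R ^+ 2 - 1) / 6.
Proof.
have e2 : \sum_(i < M) (i%:R : R) * i%:R = ps 2 M.
  by rewrite /ps; apply: eq_bigr => i _; rewrite expr2.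
have e1 : \sum_(i < M) (i%:R : R) = ps 1 M.
  by rewrite /ps; apply: eq_bigr => i _; rewrite expr1.
under eq_bigr do under eq_bigr do rewrite expr2.
rewrite (dsum (fun i => i%:R) (fun i => i%:R)) e2 e1 ps2 ps1.
by field.
Qed.
End Alg.


Section Quad.
Variable R : realType.

Lemma quad_core (A B C K u v : R) : 0 < C ->
  A * u ^+ 2 + 2 * B * u * v + C * v ^+ 2 = K ->
  (A * C - B ^+ 2) * u ^+ 2 <= K * C.
Proof.
move=> C0 hK; have := sqr_ge0 (C * v + B * u).
rewrite -hK; nra.
Qed.

Lemma quad_ext (A B C K : R) : 0 < C -> 0 < A * C - B ^+ 2 -> 0 <= K ->
  let r := Num.sqrt (K * C / (A * C - B ^+ 2)) in
  [/\ A * r ^+ 2 + 2 * B * r * (- (B * r / C)) + C * (- (B * r / C)) ^+ 2 = K,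
      A * (- r) ^+ 2 + 2 * B * (- r) * (B * r / C) + C * (B * r / C) ^+ 2 = K &
      forall u v, A * u ^+ 2 + 2 * B * u * v + C * v ^+ 2 = K -> - r <= u <= r].
Proof.
move=> C0 D0 K0 r.
have r2 : r ^+ 2 = K * C / (A * C - B ^+ 2).
  by rewrite sqr_sqrtr // divr_ge0 // ?mulr_ge0 // ltW.
have r0 : 0 <= r by exact: sqrtr_ge0.
have Cn : C != 0 by rewrite gt_eqF.
have Dn : A * C - B ^+ 2 != 0 by rewrite gt_eqF.
split.
- have -> : A * r ^+ 2 + 2 * B * r * (- (B * r / C)) + C * (- (B * r / C)) ^+ 2
     = (A * C - B ^+ 2) * r ^+ 2 / C by field.
  by rewrite r2; field; rewrite Cn Dn.
- have -> : A * (- r) ^+ 2 + 2 * B * (- r) * (B * r / C) + C * (B * r / C) ^+ 2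
     = (A * C - B ^+ 2) * r ^+ 2 / C by field.
  by rewrite r2; field; rewrite Cn Dn.
move=> u v hq; have h := @quad_core _ _ _ _ _ _ C0 hq.
have hu : u ^+ 2 <= r ^+ 2.
  by rewrite r2 ler_pdivlMr // mulrC.
rewrite -ler_norml; rewrite -(ger0_norm r0).
by rewrite -ler_sqr ?normr_ge0 // !real_normK ?num_real.
Qed.
End Quad.


Section Area.
Variable R : realType.
Local Notation mu := (@lebesgue_measure R).

Lemma sect_meas (X Y Z K x0 y0 : R) (x : R) : 0 < Z -> 0 < X * Z - Y ^+ 2 ->
  mu (xsection (enclosed X Y Z x0 y0 K) x) =
  (2 * Num.sqrt (X * Z - Y ^+ 2) / Z *
     Num.sqrt (K * Z / (X * Z - Y ^+ 2) - (x - x0) ^+ 2))%:E.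
Proof.
move=> Z0 D0.
set D := X * Z - Y ^+ 2.
set u := x - x0.
have Zn : Z != 0 by rewrite gt_eqF.
have Dn : D != 0 by rewrite gt_eqF.
have key : forall y, Z * quadE X Y Z x0 y0 (x, y) = (Z * (y - y0) + Y * u) ^+ 2 + D * u ^+ 2.
  by move=> y; rewrite /quadE /= /D /u; ring.
case: (leP 0 (K * Z / D - u ^+ 2)) => hs; last first.
  rewrite (ltr0_sqrtr hs) mulr0.
  rewrite (_ : xsection _ _ = set0) ?measure0 //.
  apply/seteqP; split => y //=; rewrite /xsection /= inE /enclosed /= => hq.
  have := key y; have := sqr_ge0 (Z * (y - y0) + Y * u).
  move: hs; rewrite subr_lt0 ltr_pdivrMr // => hs.
  nra.
set w := Num.sqrt (D * (K * Z / D - u ^+ 2)).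
have w0 : 0 <= w by exact: sqrtr_ge0.
have w2 : w ^+ 2 = D * (K * Z / D - u ^+ 2) by rewrite sqr_sqrtr // mulr_ge0 // ltW.
have hw2 : w ^+ 2 = K * Z - D * u ^+ 2 by rewrite w2; field.
have eL : y0 + (- (Y * u) - w) / Z = (y0 * Z - Y * u - w) / Z by field.
have eH : y0 + (- (Y * u) + w) / Z = (y0 * Z - Y * u + w) / Z by field.
have -> : xsection (enclosed X Y Z x0 y0 K) x =
   [set z | y0 + (- (Y * u) - w) / Z <= z <= y0 + (- (Y * u) + w) / Z].
  rewrite eL eH.
  apply/seteqP; split => y; rewrite /xsection /enclosed /= inE /=;
    rewrite ler_pdivrMr // ler_pdivlMr //; have := key y.
    move=> hk hq.
    have ht : (Z * (y - y0) + Y * u) ^+ 2 <= w ^+ 2 by nra.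
    have ht2 : - w <= Z * (y - y0) + Y * u <= w.
      by rewrite -ler_norml -(ger0_norm w0) -ler_sqr ?normr_ge0 // !real_normK ?num_real.
    move: ht2 => /andP[ht2 ht3].
    apply/andP; split; nra.
  move=> hk /andP[h1 h2].
  have ht : (Z * (y - y0) + Y * u) ^+ 2 <= w ^+ 2 by nra.
  nra.
rewrite -set_itvcc lebesgue_measure_itv /=.
have ew : w = Num.sqrt D * Num.sqrt (K * Z / D - u ^+ 2) by rewrite /w sqrtrM // ltW.
have -> : 2 * Num.sqrt D / Z * Num.sqrt (K * Z / D - u ^+ 2) = 2 * w / Z by rewrite ew; field.
have [wz|wp] : w = 0 \/ 0 < w by move: w0; rewrite le_eqVlt => /orP[/eqP ->|->]; [left|right].
  by rewrite wz subr0 addr0 ltxx mulr0 mul0r.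
rewrite lte_fin ifT; last first.
  rewrite ltrD2l ltr_pM2r ?invr_gt0 //; lra.
by rewrite -EFinD; congr EFin; field.
Qed.

Lemma area (X Y Z K x0 y0 : R) : 0 < Z -> 0 < X * Z - Y ^+ 2 -> 0 < K ->
  (mu \x mu)%E (enclosed X Y Z x0 y0 K) =
  (pi * K / Num.sqrt (X * Z - Y ^+ 2))%:E.
Proof.
move=> Z0 D0 K0.
rewrite /product_measure1 /=.
under eq_integral do rewrite /= (sect_meas _ _ _ _ _ _ _ Z0 D0).
set D := X * Z - Y ^+ 2.
set c0 := 2 * Num.sqrt D / Z.
set s2 := K * Z / D.
set r := Num.sqrt s2.
set h := fun x => c0 * Num.sqrt (s2 - (x - x0) ^+ 2).
have s20 : 0 < s2 by rewrite /s2 divr_gt0 // mulr_gt0.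
have r0 : 0 < r by rewrite sqrtr_gt0.
have r2 : r ^+ 2 = s2 by rewrite sqr_sqrtr // ltW.
transitivity (\int[mu]_x (h x)%:E)%E; first by [].
transitivity (\int[mu]_(x in `[(x0 - r)%R, (x0 + r)%R]) (h x)%:E)%E.
  rewrite [RHS]integral_mkcond; apply: eq_integral => x _.
  rewrite patchE; case: ifPn => // hx.
  rewrite /h ltr0_sqrtr ?mulr0 //.
  move: hx; rewrite notin_setE /= => /negP; rewrite in_itv /= negb_and -!ltNge -r2 => /orP[] hx; nra.
pose F := fun t : R => x0 + r * sin t.
have dF : forall t : R, is_derive t 1 F (r * cos t).
  move=> t; have := @is_deriveD R R R (cst x0) (fun t => r * sin t) t 1 0 (r * cos t).
  by rewrite add0r; apply.
have F' : (derive1 F) = fun t => r * cos t.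
  by apply/funext => t; rewrite derive1E derive_val.
have cF : continuous F.
  move=> t; apply/differentiable_continuous/derivable1_diffP.
  exact: ex_derive.
have cF' : continuous (fun t : R => r * cos t).
  move=> t; apply: cvgM; [exact: cvg_cst | exact: continuous_cos].
have Fa : F (- (pi / 2)) = x0 - r by rewrite /F sinN sin_pihalf mulrN1.
have Fb : F (pi / 2) = x0 + r by rewrite /F sin_pihalf mulr1.
have ch : continuous h.
  have -> : h = (fun x => c0 * Num.sqrt (s2 - (x - x0) * (x - x0))).
    by apply/funext => x; rewrite /h expr2.
  move=> x; apply: cvgM; first exact: cvg_cst.
  apply: continuous_comp; last exact: sqrt_continuous.
  apply: cvgB; first exact: cvg_cst.
  apply: cvgM; apply: cvgB; (exact: cvg_id || exact: cvg_cst).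
have pi0 : 0 < pi :> R by exact: pi_gt0.
have := @integration_by_substitution_increasing R F h (- (pi / 2)) (pi / 2).
rewrite Fa Fb => ->; first last.
- exact: continuous_subspaceT.
- split.
  + by move=> t _; exact: ex_derive.
  + exact: cvg_at_right_filter (cF _).
  + exact: cvg_at_left_filter (cF _).
- rewrite F'; apply/cvg_ex; exists (r * cos (pi / 2)).
  exact: cvg_at_left_filter (cF' _).
- rewrite F'; apply/cvg_ex; exists (r * cos (- (pi / 2))).
  exact: cvg_at_right_filter (cF' _).
- by rewrite F' => t _; exact: cF'.
- move=> x y hx hy xy; rewrite /F ltrD2l ltr_pM2l //.
  by rewrite ltr_sin.
- lra.
pose f := fun t : R => c0 * r ^+ 2 * cos t ^+ 2.
transitivity (\int[mu]_(x in `[(- (pi / 2))%R, (pi / 2)%R]) (f x)%:E)%E.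
  apply: eq_integral => t; rewrite inE /= in_itv /= => ht.
  rewrite F' /h /F.
  change (((c0 * Num.sqrt (s2 - (x0 + r * sin t - x0) ^+ 2)) * (r * cos t))%:E = (f t)%:E).
  have -> : s2 - (x0 + r * sin t - x0) ^+ 2 = (r * cos t) ^+ 2.
    by rewrite -r2 exprMn cos2sin2; ring.
  rewrite sqrtr_sqr ger0_norm; last by apply: mulr_ge0; [exact: ltW | exact: cos_ge0_pihalf].
  by rewrite /f; congr EFin; ring.
pose P := fun t : R => c0 * r ^+ 2 / 2 * (t + sin t * cos t).
have dP : forall t : R, is_derive t 1 P (f t).
  move=> t; apply: is_derive_eq.
  by rewrite /f /GRing.scale /= !mulrN -!expr2 !cos2sin2; field.
have cP : continuous P.
  move=> t; apply/differentiable_continuous/derivable1_diffP.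
  exact: ex_derive.
rewrite (@continuous_FTC2 R f P).
- rewrite -EFinB; congr EFin.
  have sD0 : 0 < Num.sqrt D by rewrite sqrtr_gt0.
  have eD : D = Num.sqrt D ^+ 2 by rewrite sqr_sqrtr // ltW.
  rewrite /P r2 /s2 /c0 sin_pihalf cos_pihalf sinN cosN cos_pihalf.
  move: sD0 eD; set q := Num.sqrt D => sD0 eD.
  rewrite eD; field.
  by rewrite !gt_eqF.
- lra.
- apply: continuous_subspaceT.
  have -> : f = fun t => c0 * r ^+ 2 * (cos t * cos t).
    by apply/funext => t; rewrite /f expr2.
  move=> t; apply: cvgM; first exact: cvg_cst.
  by apply: cvgM; exact: continuous_cos.
- split.
  + by move=> t _; exact: ex_derive.
  + exact: cvg_at_right_filter (cP _).
  + exact: cvg_at_left_filter (cP _).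
- by move=> t _; rewrite derive1E derive_val.
Qed.
End Area.


Lemma sq_eq (R : realType) (x y : R) : 0 <= x -> 0 <= y -> x ^+ 2 = y ^+ 2 -> x = y.
Proof.
move=> x0 y0 e.
by rewrite -(ger0_norm x0) -(ger0_norm y0) -!sqrtr_sqr e.
Qed.

Ltac pos := repeat first [ assumption | apply: mulr_gt0 | apply: divr_gt0
  | apply: exprn_gt0 | apply: pi_gt0 | rewrite invr_gt0 | rewrite sqrtr_gt0 | lra ].

Theorem corollary1 (R : realType) (M : nat) (c fc d RD thD : R) :
  (3 <= M)%nat -> 0 < c -> 0 < fc -> 0 < d -> 0 < RD ->
  - (pi / 2) < thD < pi / 2 ->
  let X := beamX M c d fc RD in
  let Y := beamY M c d fc RD thD in
  let Z := beamZ M c d fc thD in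
  let E := [set p : R * R | quadE X Y Z RD thD p = (M%:R) ^+ 2] in
  [/\ Y ^+ 2 < X * Z,
      is_ellipse_centred E RD thD,
      ((lebesgue_measure \x lebesgue_measure)%E
          (enclosed X Y Z RD thD ((M%:R) ^+ 2)) =
        (3 * Num.sqrt 15 * c ^+ 2 * RD ^+ 2 /
          (pi * fc ^+ 2 * d ^+ 3 * cos thD * ((M%:R) ^+ 2 - 1)
             * Num.sqrt ((M%:R) ^+ 2 - 4)))%:E),
      (exists rmax rmin : R,
         [/\ is_max (fst @` E) rmax, is_min (fst @` E) rmin &
             rmax - rmin = 6 * Num.sqrt 10 * c * RD ^+ 2 /
               (pi * fc * d ^+ 2 *
                  Num.sqrt (((M%:R) ^+ 2 - 1) * ((M%:R) ^+ 2 - 4)))]) &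
      (exists tmax tmin : R,
         [/\ is_max (snd @` E) tmax, is_min (snd @` E) tmin &
             tmax - tmin =
               c * Num.sqrt (6 * (16 * (M%:R) ^+ 2 - 30 * M%:R + 11)) /
               (pi * fc * d * cos thD *
                  Num.sqrt (((M%:R) ^+ 2 - 1) * ((M%:R) ^+ 2 - 4)))])].
Proof.
move=> hM c0 fc0 d0 RD0 /andP[th1 th2] X Y Z E.
have N3 : (3 : R) <= M%:R by rewrite ler_nat.
move: N3; set N := (M%:R : R) => N3.
have cs0 : 0 < cos thD by apply: cos_gt0_pihalf; rewrite th1 th2.
move: cs0; set cs := cos thD => cs0.
have pi0 : 0 < pi :> R by exact: pi_gt0.
set a := d ^+ 2 * fc / (2 * RD ^+ 2).
have a0 : 0 < a by rewrite /a; pos.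
have hX : X = 4 * pi ^+ 2 / c ^+ 2 * (a ^+ 2 *
   (N ^+ 2 * (N - 1) * (2 * N - 1) * (8 * N ^+ 2 - 3 * N - 11) / 90)).
  by rewrite /X /beamX sumXc.
have hY : Y = 4 * pi ^+ 2 * d * fc * cs / c ^+ 2 * (- a * (N ^+ 2 * (N - 1) ^+ 2 * (N + 1) / 6)).
  by rewrite /Y /beamY sumYc.
have hZ : Z = 4 * pi ^+ 2 * fc ^+ 2 * d ^+ 2 * cs ^+ 2 / c ^+ 2 * (N ^+ 2 * (N ^+ 2 - 1) / 6).
  by rewrite /Z /beamZ sumZc.
clearbody X Y Z.
have hD : X * Z - Y ^+ 2 = (4 * pi ^+ 2 / c ^+ 2) ^+ 2 * a ^+ 2 * fc ^+ 2 * d ^+ 2 * cs ^+ 2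
   * (N ^+ 4 * (N ^+ 2 - 1) ^+ 2 * (N ^+ 2 - 4) / 540).
  by rewrite hX hY hZ; field; rewrite gt_eqF.
have N1 : 0 < N ^+ 2 - 1 by nra.
have N4 : 0 < N ^+ 2 - 4 by nra.
have N0 : 0 < N by lra.
have D0 : 0 < X * Z - Y ^+ 2 by rewrite hD; pos.
have X0 : 0 < X.
  rewrite hX; pos; nra.
have Z0 : 0 < Z by rewrite hZ; pos.
have K0 : 0 < N ^+ 2 by pos.
have cn : c != 0 by rewrite gt_eqF.
have fcn : fc != 0 by rewrite gt_eqF.
have dn : d != 0 by rewrite gt_eqF.
have RDn : RD != 0 by rewrite gt_eqF.
have csn : cs != 0 by rewrite gt_eqF.
have pin : pi != 0 :> R by rewrite gt_eqF.
have Nn : N != 0 by rewrite gt_eqF.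
have N1n : N ^+ 2 - 1 != 0 by rewrite gt_eqF.
have N4n : N ^+ 2 - 4 != 0 by rewrite gt_eqF.
have Xn : X != 0 by rewrite gt_eqF.
have Zn : Z != 0 by rewrite gt_eqF.
have Dn : X * Z - Y ^+ 2 != 0 by rewrite gt_eqF.
have Kn : N ^+ 2 != 0 by rewrite gt_eqF.
split.
- by rewrite -subr_gt0.
- exists (X / N ^+ 2), (Y / N ^+ 2), (Z / N ^+ 2); split; last split.
  + by pos.
  + rewrite -subr_gt0.
    have -> : X / N ^+ 2 * (Z / N ^+ 2) - (Y / N ^+ 2) ^+ 2 = (X * Z - Y ^+ 2) / N ^+ 4.
      by field.
    by pos.
  + apply/seteqP; split => p /=.
      move=> h; have h' : quadE X Y Z RD thD p = N ^+ 2 := h.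
      transitivity (quadE X Y Z RD thD p / N ^+ 2); first by rewrite /quadE; field.
      by rewrite h' divff.
    move=> h.
    have e : quadE X Y Z RD thD p / N ^+ 2 = 1.
      by rewrite -h /quadE; field.
    have e2 : quadE X Y Z RD thD p = N ^+ 2.
      by rewrite -(divfK Kn (quadE X Y Z RD thD p)) e mul1r.
    exact: e2.
- rewrite (@area R X Y Z (N ^+ 2) RD thD Z0 D0 K0); congr EFin.
  apply: sq_eq; [apply: ltW; pos | apply: ltW; pos |].
  rewrite !expr_div_n !exprMn !sqr_sqrtr ?ltW //.
  rewrite hD /a; move: pin; generalize (@pi R) => P Pn; field; repeat (apply/andP; split); try assumption.
- have := @quad_ext _ X Y Z (N ^+ 2) Z0 D0 (ltW K0).
  move=> /=; set r := Num.sqrt _; move=> [h1 h2 h3].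
  have r0 : 0 < r by rewrite /r; pos.
  exists (RD + r), (RD - r); split.
  + split.
      exists (RD + r, thD + - (Y * r / Z)) => //.
      by rewrite /E /=; apply: eq_trans h1; rewrite /quadE /=; ring.
    move=> y [p Ep <-].
    have := h3 _ _ Ep; rewrite /= => /andP[_]; lra.
  + split.
      exists (RD - r, thD + Y * r / Z) => //.
      by rewrite /E /=; apply: eq_trans h2; rewrite /quadE /=; ring.
    move=> y [p Ep <-].
    have := h3 _ _ Ep; rewrite /= => /andP[+ _]; lra.
  + have -> : RD + r - (RD - r) = 2 * r by ring.
    apply: sq_eq; [apply: ltW; pos | apply: ltW; pos |].
    rewrite !expr_div_n !exprMn !sqr_sqrtr ?ltW //; last by pos.
    rewrite hD hZ /a; move: pin; generalize (@pi R) => P Pn; field.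
      by repeat (apply/andP; split); assumption.
    by pos.
- have D0' : 0 < Z * X - Y ^+ 2 by rewrite mulrC.
  have := @quad_ext _ Z Y X (N ^+ 2) X0 D0' (ltW K0).
  move=> /=; set r := Num.sqrt _; move=> [h1 h2 h3].
  have r0 : 0 < r by rewrite /r; pos.
  have h3' : forall p, E p -> - r <= p.2 - thD <= r.
    move=> p Ep; apply: (h3 _ (p.1 - RD)).
    by apply: eq_trans Ep; rewrite /quadE; ring.
  exists (thD + r), (thD - r); split.
  + split.
      exists (RD + - (Y * r / X), thD + r) => //.
      by rewrite /E /=; apply: eq_trans h1; rewrite /quadE /=; ring.
    move=> y [p Ep <-].
    have := h3' _ Ep; rewrite /= => /andP[_]; lra.
  + split.
      exists (RD + Y * r / X, thD - r) => //.
      by rewrite /E /=; apply: eq_trans h2; rewrite /quadE /=; ring.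
    move=> y [p Ep <-].
    have := h3' _ Ep; rewrite /= => /andP[+ _]; lra.
  + have -> : thD + r - (thD - r) = 2 * r by ring.
    have Q0 : 0 < 16 * N ^+ 2 - 30 * N + 11 by nra.
    apply: sq_eq; [apply: ltW; pos | apply: ltW; pos |].
    rewrite !expr_div_n !exprMn !sqr_sqrtr ?ltW //; last by pos.
    rewrite (mulrC Z X) hD hX /a; move: pin; generalize (@pi R) => P Pn; field.
      by repeat (apply/andP; split); assumption.
    all: by pos.
Qed.
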